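(* Let $\beta>1$ be an Ito-Sadahiro number, with $d_{-\beta}(l_\beta)=d_1\cdots d_m\,(d_{m+1}\cdots d_{m+p})^\omega$, where $m\ge0$, $p\ge1$ are minimal such that $d_{-\beta}(l_\beta)$ can be written in this form, and let $$P(x)=(-x)^{m+1}\sum_{i=0}^{p-1}(-x)^i+\big((-x)^p-1\big)\sum_{i=1}^m d_i(-x)^{m-i}+\sum_{i=m+1}^{m+p}d_i(-x)^{m+p-i}$$ be its Ito-Sadahiro polynomial. Then every complex root $\gamma\neq\beta$ of $P$ satisfies $|\gamma|<2$. In particular, every algebraic conjugate $\gamma\ne\beta$ of $\beta$ satisfies $|\gamma|<2$.
   Context: For $\beta>1$ put $l_\beta=-\frac{\beta}{\beta+1}$, $r_\beta=\frac{1}{\beta+1}$ and $I_\beta=[l_\beta,r_\beta)$. Define $T:I_\beta\to I_\beta$ by $T(x)=-\beta x-\lfloor -\beta x-l_\beta\rfloor$. The $(-\beta)$-expansion of $x\in I_\beta$ is the infinite word $d_{-\beta}(x)=x_1x_2x_3\cdots$ with $x_i=\lfloor -\beta T^{i-1}(x)-l_\beta\rfloor$ for $i\ge1$; then $x=\sum_{i\ge1}x_i(-\beta)^{-i}$. The notation $w^\omega$ denotes infinite repetition of the finite word $w$. A number $\beta>1$ is an Ito-Sadahiro number if $d_{-\beta}(l_\beta)$ is eventually periodic. *)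

(* Defs.v *)
From HB Require Import structures.
From mathcomp Require Import all_boot all_order all_algebra.
From mathcomp Require Import reals.
From mathcomp Require Export complex.
Set Implicit Arguments. Unset Strict Implicit. Unset Printing Implicit Defensive.
Import Order.TTheory GRing.Theory Num.Theory.
Local Open Scope ring_scope.

Section NegBeta.
Variable R : realType.

Definition lbeta (b : R) : R := - b / (b + 1).
Definition rbeta (b : R) : R := 1 / (b + 1).

Definition nbdigit (b x : R) : int := Num.floor (- b * x - lbeta b).

Definition nbT (b x : R) : R := - b * x - (nbdigit b x)%:~R.

(* d_{-beta}(x), 0-indexed: nbexp b x i = x_{i+1} = digit of T^i(x) *)
Definition nbexp (b x : R) (i : nat) : int := nbdigit b (iter i (nbT b) x).

(* the infinite word d is of the form d_1..d_m (d_{m+1}..d_{m+p})^omega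
   (0-indexed: d (k+p) = d k for all k >= m) *)
Definition preperiodic_form (d : nat -> int) (m p : nat) : Prop :=
  (1 <= p)%N /\ forall k, (m <= k)%N -> d (k + p)%N = d k.

Definition ito_sadahiro (b : R) : Prop :=
  1 < b /\ exists m p, preperiodic_form (nbexp b (lbeta b)) m p.

Definition minimal_form (d : nat -> int) (m p : nat) : Prop :=
  preperiodic_form d m p /\
  forall m' p', preperiodic_form d m' p' -> (m <= m')%N /\ (p <= p')%N.

(* The Ito-Sadahiro polynomial, with integer coefficients
   (d i denotes d_{i+1}) :
   (-x)^(m+1) sum_{i=0}^{p-1} (-x)^i
   + ((-x)^p - 1) sum_{i=1}^m d_i (-x)^(m-i)
   + sum_{i=m+1}^{m+p} d_i (-x)^(m+p-i) *)
Definition IS_poly (d : nat -> int) (m p : nat) : {poly int} :=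
  (- 'X) ^+ m.+1 * \sum_(0 <= i < p) (- 'X) ^+ i
  + ((- 'X) ^+ p - 1) * \sum_(1 <= i < m.+1) (d i.-1)%:P * (- 'X) ^+ (m - i)
  + \sum_(m.+1 <= i < (m + p).+1) (d i.-1)%:P * (- 'X) ^+ (m + p - i).

End NegBeta.

(* Main.v *)
Require Import Defs.
From HB Require Import structures.
From mathcomp Require Import all_boot all_order all_algebra.
From mathcomp Require Import reals complex.
From mathcomp Require Import ring lra zify.
Import Order.TTheory GRing.Theory Num.Theory.
Local Open Scope ring_scope.

Definition tt {R : realType} (b : R) (n : nat) : R := iter n (nbT b) (lbeta b).

Lemma tS {R : realType} (b : R) n :
  tt b n.+1 = - b * tt b n - (nbexp b (lbeta b) n)%:~R.
Proof. by rewrite /tt iterS /nbT /nbexp. Qed.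

Lemma tbound {R : realType} (b : R) n : lbeta b <= tt b n < lbeta b + 1.
Proof.
case: n => [|n]; first by rewrite /tt /= lexx ltrDl ltr01.
rewrite /tt iterS /nbT /nbdigit.
set v := - b * _ - lbeta b.
have h1 := floor_le v. have h2 := floorD1_gt v.
rewrite intrD in h2.
rewrite /v in h1 h2 *. apply/andP; split; lra.
Qed.

Lemma bern {R : realType} (b : R) (k : nat) : 1 <= b -> 1 + k%:R * (b - 1) <= b ^+ k.
Proof.
move=> hb; elim: k => [|k IH]; first by rewrite mul0r addr0 expr0.
rewrite exprS -natr1.
have hk : 0 <= (k%:R : R) by apply: ler0n.
set x := b ^+ k in IH *.
have h1 : 0 <= b * (x - (1 + k%:R * (b - 1))) by apply: mulr_ge0; lra.
have h2 : 0 <= k%:R * ((b - 1) * (b - 1)) by apply: mulr_ge0 => //; nra.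
nra.
Qed.

Lemma tper {R : realType} (b : R) m p : 1 < b ->
  preperiodic_form (nbexp b (lbeta b)) m p ->
  forall n, (m <= n)%N -> tt b (n + p) = tt b n.
Proof.
move=> hb [hp hper].
have rec : forall k, tt b (m + k + p) - tt b (m + k) = (- b) ^+ k * (tt b (m + p) - tt b m).
  elim=> [|k IH]; first by rewrite addn0 expr0 mul1r.
  rewrite addnS (addSn (m + k)) !tS hper ?leq_addr // exprS -mulrA -IH; ring.
have bnd : forall k, `|(- b) ^+ k * (tt b (m + p) - tt b m)| < 1.
  move=> k; rewrite -rec ltr_norml.
  have := tbound b (m + k + p); have := tbound b (m + k). move=> /andP[? ?] /andP[? ?]. apply/andP; split; lra.
have e0 : tt b (m + p) - tt b m = 0.
  apply/eqP; apply/negPn/negP => hne.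
  have hpos : 0 < `|tt b (m + p) - tt b m| by rewrite normr_gt0.
  set e := `|tt b (m + p) - tt b m| in hpos.
  have x0 : 0 <= (e * (b - 1))^-1 by rewrite invr_ge0; apply: mulr_ge0; lra.
  have := archi_boundP x0. set k := Num.bound _ => hk.
  have := bnd k; rewrite normrM normrX normrN (gtr0_norm (lt_trans ltr01 hb)) -/e => hk2.
  have := bern b k (ltW hb) => hb2.
  have he1 : 0 < e * (b - 1) by apply: mulr_gt0; lra.
  have : 1 < k%:R * (e * (b-1)) by rewrite -ltr_pdivrMr // div1r.
  nra.
move=> n hn; rewrite -(subnKC hn).
by have := rec (n - m)%N; rewrite e0 mulr0 => /eqP; rewrite subr_eq0 => /eqP.
Qed.

Lemma horner_IS {R : realType} (d : nat -> int) m p (g : R[i]) :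
  (map_poly (fun z : int => z%:~R) (IS_poly d m p)).[g] =
  (- g) ^+ m.+1 * \sum_(0 <= i < p) (- g) ^+ i
  + ((- g) ^+ p - 1) * \sum_(1 <= i < m.+1) (d i.-1)%:~R * (- g) ^+ (m - i)
  + \sum_(m.+1 <= i < (m + p).+1) (d i.-1)%:~R * (- g) ^+ (m + p - i).
Proof.
rewrite /IS_poly !rmorphD !rmorphM /= !rmorph_sum /= !hornerE !horner_sum.
rewrite !rmorphXn !rmorphN !rmorphB rmorph1 /= map_polyX !hornerE.
have E : forall k, (map_poly (fun z : int => (z%:~R : R[i])) ((- 'X) ^+ k)).[g] = (- g) ^+ k.
  by move=> k; rewrite rmorphXn rmorphN /= map_polyX hornerE hornerN hornerX.
have F : forall (c : int) k, (map_poly (fun z : int => (z%:~R : R[i])) (c%:P * (- 'X) ^+ k)).[g] = c%:~R * (- g) ^+ k.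
  by move=> c k; rewrite rmorphM /= map_polyC hornerM E hornerC.
rewrite E; congr (_ * _ + _ * _ + _); apply: eq_bigr => i _; [exact: E|exact: F|exact: F].
Qed.


Definition tc {R : realType} (b : R) n : R[i] := ((tt b n)%:C)%C.
Definition dc {R : realType} (b : R) n : R[i] := (nbexp b (lbeta b) n)%:~R.
Fixpoint Dsum {R : realType} (b : R) (y : R[i]) N : R[i] :=
  if N is N'.+1 then y * Dsum b y N' + dc b N' else 0.
Fixpoint Csum {R : realType} (b : R) (y : R[i]) N : R[i] :=
  if N is N'.+1 then y * Csum b y N' + (tc b N'.+1 - tc b N') else 0.

Lemma tcS {R : realType} (b : R) n : tc b n.+1 = - (b%:C)%C * tc b n - dc b n.
Proof. by rewrite /tc tS rmorphB rmorphM rmorphN rmorph_int. Qed.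

Lemma tc0 {R : realType} (b : R) : 1 < b -> ((b%:C)%C + 1) * tc b 0 = - (b%:C)%C.
Proof.
move=> hb; rewrite /tc /tt /= /lbeta.
have -> : ((b%:C)%C + 1 : R[i]) = ((b + 1)%:C)%C by rewrite rmorphD rmorph1.
rewrite -rmorphM -rmorphN; congr (_%:C)%C.
have h : b + 1 != 0 by rewrite lt0r_neq0 //; lra.
by field.
Qed.

Lemma star {R : realType} (b : R) (y : R[i]) N : 1 < b ->
  (y - 1) * Dsum b y N + (y + (b%:C)%C) * Csum b y N
  = ((b%:C)%C + 1) * tc b N + (b%:C)%C * y ^+ N.
Proof.
move=> hb; elim: N => [|N IH] /=.
  by rewrite !mulr0 addr0 tc0 // expr0 mulr1 addNr.
have -> : (y - 1) * (y * Dsum b y N + dc b N) + (y + (b%:C)%C) * (y * Csum b y N + (tc b N.+1 - tc b N))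
  = y * ((y - 1) * Dsum b y N + (y + (b%:C)%C) * Csum b y N) + (y - 1) * dc b N + (y + (b%:C)%C) * (tc b N.+1 - tc b N) by ring.
rewrite IH tcS exprS; ring.
Qed.

Lemma sumD {R : realType} (b : R) (y : R[i]) M n :
  \sum_(M.+1 <= i < (M + n).+1) (nbexp b (lbeta b) i.-1)%:~R * y ^+ (M + n - i)
  = Dsum b y (M + n) - y ^+ n * Dsum b y M.
Proof.
elim: n => [|n IH].
  by rewrite addn0 big_geq // expr0 mul1r subrr.
rewrite big_nat_recr /=; last by lia.
rewrite addnS subnn expr0 mulr1 /=.
rewrite (eq_big_nat _ _ (F2 := fun i => y * ((nbexp b (lbeta b) i.-1)%:~R * y ^+ (M + n - i)))); last first.
  move=> i /andP[_ hi]; rewrite subSn; last by lia.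
  by rewrite exprS; ring.
rewrite -mulr_sumr IH exprS /dc; ring.
Qed.

Definition Vv {R : realType} (b : R) (y : R[i]) N := y ^+ N - Csum b y N.

Lemma key {R : realType} (b : R) (y : R[i]) m p : 1 < b -> tt b (m + p) = tt b m ->
  (y - 1) * ((y) ^+ m.+1 * \sum_(0 <= i < p) (y) ^+ i
  + ((y) ^+ p - 1) * \sum_(1 <= i < m.+1) (nbexp b (lbeta b) i.-1)%:~R * (y) ^+ (m - i)
  + \sum_(m.+1 <= i < (m + p).+1) (nbexp b (lbeta b) i.-1)%:~R * (y) ^+ (m + p - i))
  = (y + (b%:C)%C) * (Vv b y (m + p) - Vv b y m).
Proof.
move=> hb hper.
have S1 := sumD b y 0 m. rewrite add0n /= mulr0 subr0 in S1.
rewrite S1 sumD.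
have G : (y - 1) * \sum_(0 <= i < p) y ^+ i = y ^+ p - 1.
  by rewrite big_mkord subrX1.
have E1 := star b y (m + p) hb. have E2 := star b y m hb.
have ht : tc b (m + p) = tc b m by rewrite /tc hper.
rewrite /Vv.
have -> : (y - 1) * (y ^+ m.+1 * \sum_(0 <= i < p) y ^+ i + (y ^+ p - 1) * Dsum b y m +
   (Dsum b y (m + p) - y ^+ p * Dsum b y m)) =
   y ^+ m.+1 * ((y - 1) * \sum_(0 <= i < p) y ^+ i) +
   ((y - 1) * Dsum b y (m + p) + (y + (b%:C)%C) * Csum b y (m + p))
   - ((y - 1) * Dsum b y m + (y + (b%:C)%C) * Csum b y m)
   - (y + (b%:C)%C) * Csum b y (m + p) + (y + (b%:C)%C) * Csum b y m by ring.
rewrite G E1 E2 ht !exprD exprS; ring.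
Qed.

Import ComplexField.Normc.

Lemma normcE' {R : realType} (z : R[i]) : `|z| = ((normc z)%:C)%C.
Proof. by case: z => a c; rewrite normc_def. Qed.

Lemma normc_ge0 {R : realType} (z : R[i]) : 0 <= normc z.
Proof. by case: z => a c; rewrite /= sqrtr_ge0. Qed.

Lemma normc_real {R : realType} (x : R) : normc ((x%:C)%C : R[i]) = `|x|.
Proof. by rewrite /= expr0n /= addr0 sqrtr_sqr. Qed.

Lemma VS {R : realType} (b : R) y N : Vv b y N.+1 = y * Vv b y N - (tc b N.+1 - tc b N).
Proof. rewrite /Vv /= exprS; ring. Qed.

Lemma cbound {R : realType} (b : R) N : normc (tc b N.+1 - tc b N) < 1.
Proof.
rewrite /tc -rmorphB normc_real ltr_norml.
have := tbound b N.+1; have := tbound b N => /andP[? ?] /andP[? ?]; apply/andP; split; lra.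
Qed.

Lemma lowb {R : realType} (b : R) (y : R[i]) : 2 <= normc y ->
  forall N, 1 + N%:R * (1 - normc (tc b 1 - tc b 0)) <= normc (Vv b y N).
Proof.
move=> hy; elim=> [|N IH].
  have -> : Vv b y 0 = 1 by rewrite /Vv expr0 subr0.
  by rewrite mul0r addr0 normc1.
have h1 := le_normcD (y * Vv b y N - (tc b N.+1 - tc b N)) (tc b N.+1 - tc b N).
rewrite subrK normcM -VS in h1.
have hc := cbound b N. have hc0 := cbound b 0.
have hV := normc_ge0 (Vv b y N).
have hn := normc_ge0 (tc b N.+1 - tc b N).
have hn0 := normc_ge0 (tc b 1 - tc b 0).
have h2 : 2 * normc (Vv b y N) <= normc y * normc (Vv b y N) by apply: ler_wpM2r.
rewrite -natr1.
case: N IH h1 h2 hc hn hV => [|N] IH h1 h2 hc hn hV.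
  rewrite mul0r addr0 in IH. rewrite add0r mul1r. lra.
have hN : (0 : R) <= N%:R by apply: ler0n.
rewrite -natr1 in IH *.
set e := 1 - normc (tc b 1 - tc b 0) in IH *.
have he : 0 <= N%:R * e by apply: mulr_ge0 => //; rewrite /e; lra.
nra.
Qed.

Lemma Vper {R : realType} (b : R) (y : R[i]) m p : 1 < b ->
  preperiodic_form (nbexp b (lbeta b)) m p ->
  Vv b y (m + p) = Vv b y m -> forall k, Vv b y (m + k * p) = Vv b y m.
Proof.
move=> hb hf h0.
have tp := tper b m p hb hf.
have W : forall j, Vv b y (m + j + p) = Vv b y (m + j).
  elim=> [|j IH]; first by rewrite addn0.
  rewrite addnS addSn !VS IH /tc -addSn !tp //; lia.

elim=> [|k IH]; first by rewrite mul0n addn0.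
have -> : (m + k.+1 * p = m + k * p + p)%N by rewrite mulSnr; lia.
by rewrite W IH.
Qed.

Lemma part1 {R : realType} (b : R) m p (g : R[i]) : 1 < b ->
  preperiodic_form (nbexp b (lbeta b)) m p ->
  root (map_poly (fun z : int => z%:~R) (IS_poly (nbexp b (lbeta b)) m p)) g ->
  g != (b%:C)%C -> `|g| < 2.
Proof.
move=> hb hf hroot hg.
have hp : (1 <= p)%N by case: hf.
rewrite normcE' -(rmorph_nat (real_complex R) 2) ltcR ltNge; apply/negP => hy.
set y := - g.
have hy' : 2 <= normc y by rewrite /y normcN.
move/rootP: hroot; rewrite horner_IS => hQ.
have := key b y m p hb (tper b m p hb hf m (leqnn m)).
rewrite -/y in hQ. rewrite hQ mulr0 => /esym/eqP; rewrite mulf_eq0 => /orP[|].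
  rewrite /y addrC subr_eq0 => /eqP hgb. by move/eqP: hg; apply.
rewrite subr_eq0 => /eqP hV.
have VP := Vper b y m p hb hf hV.
have LB := lowb b y hy'.
set e := 1 - normc (tc b 1 - tc b 0) in LB.
have he : 0 < e by rewrite /e; have := cbound b 0; lra.
have x0 : 0 <= normc (Vv b y m) / e by apply: divr_ge0 => //; [exact: normc_ge0 | exact: ltW].
have := archi_boundP x0; set k := Num.bound _ => hk.
have := LB (m + k * p)%N; rewrite VP.
have hkn : (k%:R : R) <= (m + k * p)%:R by rewrite ler_nat; nia.
rewrite ltr_pdivrMr // in hk.
have h3 : k%:R * e <= (m + k * p)%:R * e by apply: ler_wpM2r => //; exact: ltW.
lra.
Qed.

Lemma rootb {R : realType} (b : R) m p : 1 < b ->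
  preperiodic_form (nbexp b (lbeta b)) m p ->
  root (map_poly (fun z : int => z%:~R) (IS_poly (nbexp b (lbeta b)) m p)) ((b%:C)%C : R[i]).
Proof.
move=> hb hf; apply/rootP; rewrite horner_IS.
have := key b (- (b%:C)%C) m p hb (tper b m p hb hf m (leqnn m)).
rewrite addNr mul0r => /eqP; rewrite mulf_eq0 => /orP[|/eqP //].
rewrite -opprD oppr_eq0 -(rmorph1 (real_complex R)) -rmorphD.
have : b + 1 != 0 by rewrite lt0r_neq0 //; lra.
by move=> /negPf h; rewrite (inj_eq (@complexI R)) h.
Qed.

Lemma part2 {R : realType} (b : R) m p (q : {poly rat}) (g : R[i]) : 1 < b ->
  preperiodic_form (nbexp b (lbeta b)) m p ->
  irreducible_poly q ->
  root (map_poly (fun z : rat => ratr z) q) (b%:C)%C ->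
  root (map_poly (fun z : rat => ratr z) q) g ->
  g != (b%:C)%C -> `|g| < 2.
Proof.
move=> hb hf hq hqb hqg hg.
set P := IS_poly (nbexp b (lbeta b)) m p.
set Pq : {poly rat} := map_poly (fun z : int => z%:~R) P.
have EP : map_poly (fun z : rat => (ratr z : R[i])) Pq = map_poly (fun z : int => z%:~R) P.
  rewrite /Pq -map_poly_comp; apply: eq_map_poly => z /=; exact: ratr_int.
apply: (part1 b m p g hb hf _ hg).
have hd : q %| Pq.
  apply/negPn; rewrite -irreducible_poly_coprime //; apply/negP => hc.
  have hc' : coprimep (map_poly (fun z : rat => (ratr z : R[i])) q) (map_poly (fun z : rat => (ratr z : R[i])) Pq).
    by rewrite (coprimep_map (ratr : {rmorphism rat -> R[i]})).
  move: (coprimep_root hc' hqb); rewrite EP.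
  by move/rootP: (rootb b m p hb hf) => ->; rewrite eqxx.
rewrite -EP; apply: root_dvdp hqg; by rewrite dvdp_map.
Qed.

Theorem theorem1 (R : realType) (b : R) (m p : nat) :
  ito_sadahiro b ->
  minimal_form (nbexp b (lbeta b)) m p ->
  (forall g : R[i],
      root (map_poly (fun z : int => z%:~R) (IS_poly (nbexp b (lbeta b)) m p)) g ->
      g != (b%:C)%C -> `|g| < 2) /\
  (forall (q : {poly rat}) (g : R[i]),
      irreducible_poly q ->
      root (map_poly (fun z : rat => ratr z) q) (b%:C)%C ->
      root (map_poly (fun z : rat => ratr z) q) g ->
      g != (b%:C)%C -> `|g| < 2).
Proof.
rewrite /ito_sadahiro /minimal_form => -[hb _] [hf _]; split.
  by move=> g; exact: (part1 b m p g hb hf).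
by move=> q g; exact: (part2 b m p q g hb hf).
Qed.
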